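(* Let $\mathcal A$ be a well-structured abstract domain with functions $(\alpha,\gamma)$, and let monotone abstract operators $\llbracket e\rrbracket^\#:\mathcal A\to\mathcal A$ be given for each basic command $e$. Consider the induced Hoare-type proof system described in the context. (1) If $\llbracket e\rrbracket^\#$ is a sound abstraction of $\llbracket e\rrbracket$ for each basic command $e$, then the proof system is sound: $\vdash\{a\}S\{b\}$ implies $\models\{a\}S\{b\}$. (2) If $\llbracket e\rrbracket^\#$ is a complete abstraction of $\llbracket e\rrbracket$ for each basic command $e$, then the proof system is sound and relatively complete: $\vdash\{a\}S\{b\}$ iff $\models\{a\}S\{b\}$, for all $a,b\in\mathcal A$ and programs $S$.
   Context: Fix a finite set $V$ of quantum variables, each a qubit with state space $\mathcal H_q\cong\mathbb C^2$; for $W\subseteq V$, $\mathcal H_W=\bigotimes_{q\in W}\mathcal H_q$. Operators and subspaces on $\mathcal H_W$ are identified with their cylindrical extensions to $\mathcal H_V$, and a subspace is identified with its orthogonal projector; $P^\perp$ is the orthocomplement. $\mathcal D(\mathcal H_V)$ is the set of partial density operators (positive, trace $\le1$). Programs: $S::=\mathbf{skip}\mid \bar q:=|0\rangle\mid \bar q\mathrel{*{=}}U\mid \mathbf{assert}\ P[\bar q]\mid S_0;S_1\mid \mathbf{if}\ P[\bar q]\ \mathbf{then}\ S_1\ \mathbf{else}\ S_0\ \mathbf{end}\mid\mathbf{while}\ P[\bar q]\ \mathbf{do}\ S\ \mathbf{end}$, with $\bar q=q_1,\dots,q_t$ distinct variables, $U$ unitary on $\mathcal H_{\bar q}$, $P$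 a subspace of $\mathcal H_{\bar q}$; the first four forms are the basic commands. Semantics $\llbracket S\rrbracket:\mathcal D(\mathcal H_V)\to\mathcal D(\mathcal H_V)$: $\llbracket\mathbf{skip}\rrbracket(\rho)=\rho$; $\llbracket\bar q:=|0\rangle\rrbracket(\rho)=\sum_{i=0}^{2^t-1}|0\rangle_{\bar q}\langle i|\rho|i\rangle_{\bar q}\langle0|$; $\llbracket\bar q\mathrel{*{=}}U\rrbracket(\rho)=U\rho U^\dagger$; $\llbracket\mathbf{assert}\ P[\bar q]\rrbracket(\rho)=P\rho P$; $\llbracket S_0;S_1\rrbracket=\llbracket S_1\rrbracket\circ\llbracket S_0\rrbracket$; $\llbracket\mathbf{if}\ P[\bar q]\ \mathbf{then}\ S_1\ \mathbf{else}\ S_0\ \mathbf{end}\rrbracket(\rho)=\llbracket\mathbf{assert}\ P[\bar q];S_1\rrbracket(\rho)+\llbracket\mathbf{assert}\ P^\perp[\bar q];S_0\rrbracket(\rho)$; $\llbracket\mathbf{while}\ P[\bar q]\ \mathbf{do}\ S\ \mathbf{end}\rrbracket(\rho)=\sum_{i\ge0}\llbracket(\mathbf{assert}\ P[\bar q];S)^i;\mathbf{assert}\ P^\perp[\bar q]\rrbracket(\rho)$, where $T^i$ is $i$-fold sequential composition ($T^0=\mathbf{skip}$). The concrete domain is $\mathcal Q=2^{\mathcal D(\mathcal H_V)}$ ordered by inclusion, and $\llbracket S\rrbracket(R)=\{\llbracket S\rrbracket(\rho):\rho\in R\}$. A pair of monotone maps $(\alpha,\gamma)$ between posets is a Galois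 connection if $c\le\gamma(a)\iff\alpha(c)\le a$, and a Galois embedding if moreover $\alpha\circ\gamma=\mathrm{id}$. A complete lattice $(\mathcal A,\le_{\mathcal A},\vee,\wedge,\bot,\top)$ with monotone $\alpha:\mathcal Q\to\mathcal A$, $\gamma:\mathcal A\to\mathcal Q$ is a well-structured abstract domain if (a) $(\alpha,\gamma)$ is a Galois embedding, and (b) for any family $\rho_i\in\mathcal D(\mathcal H_V)$ and reals $x_i>0$ with $\sum_i x_i\rho_i\in\mathcal D(\mathcal H_V)$, $\alpha(\sum_i x_i\rho_i)=\bigvee_i\alpha(\rho_i)$, where $\alpha(\rho)=\alpha(\{\rho\})$. For $f:\mathcal Q\to\mathcal Q$, $f^\#:\mathcal A\to\mathcal A$ is a sound abstraction if $\alpha\circ f\le_{\mathcal A}f^\#\circ\alpha$ pointwise, a complete abstraction if $\alpha\circ f=f^\#\circ\alpha$. Induced Hoare system: assertions are elements of $\mathcal A$; a triple $\{a\}S\{b\}$ is valid, $\models\{a\}S\{b\}$, iff $\llbracket S\rrbracket(\gamma(a))\subseteq\gamma(b)$. Derivability $\vdash\{a\}S\{b\}$ is w.r.t. the rules: (Exp) $\{a\}e\{\llbracket e\rrbracket^\#(a)\}$ for every basic command $e$; (Seq) from $\{a\}S_0\{a'\}$ and $\{a'\}S_1\{b\}$ infer $\{a\}S_0;S_1\{b\}$; (Imp) from $a\le_{\mathcal A}a'$, $\{a'\}S\{b'\}$, $b'\le_{\mathcal A}b$ infer $\{a\}S\{b\}$; (Meas) from $\{a\}\mathbf{assert}\ P[\bar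 q];S_1\{b_1\}$ and $\{a\}\mathbf{assert}\ P^\perp[\bar q];S_0\{b_0\}$ infer $\{a\}\mathbf{if}\ P[\bar q]\ \mathbf{then}\ S_1\ \mathbf{else}\ S_0\ \mathbf{end}\{b_0\vee b_1\}$; (While) from $\{a\}\mathbf{assert}\ P[\bar q];S\{a\}$ and $\{a\}\mathbf{assert}\ P^\perp[\bar q]\{b\}$ infer $\{a\}\mathbf{while}\ P[\bar q]\ \mathbf{do}\ S\ \mathbf{end}\{b\}$. *)

(* Defs.v *)
From HB Require Import structures.
From mathcomp Require Import all_boot all_order all_algebra.
From mathcomp Require Import all_classical all_reals all_analysis.
From mathcomp.real_closed Require Import complex.

Set Implicit Arguments.
Unset Strict Implicit.
Unset Printing Implicit Defensive.

Import Order.TTheory GRing.Theory Num.Theory.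
Import numFieldNormedType.Exports.
Local Open Scope classical_set_scope.
Local Open Scope ring_scope.

Section QuantumDefs.
Variable R : realType.
Local Notation C := (R[i]).

(* Computational basis of n qubits: bit strings 'I_n -> bool.
   dim n = #|{ffun 'I_n -> bool}| = 2^n. Basis vectors are indexed through
   enum_val / enum_rank. *)
Notation dim n := #|{ffun 'I_n -> bool}|.

Definition adj m p (A : 'M[C]_(m, p)) : 'M[C]_(p, m) := (map_mx (@conjc R) A)^T.

Definition pdo d (rho : 'M[C]_d) : Prop :=
  (forall v : 'cV[C]_d, 0 <= (adj v *m rho *m v) 0 0) /\ \tr rho <= 1.

Definition unitary d (U : 'M[C]_d) : Prop := adj U *m U = 1%:M.

(* subspaces are represented by their orthogonal projectors *)
Definition projector d (P : 'M[C]_d) : Prop := adj P = P /\ P *m P = P.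

Definition loc n t (qs : t.-tuple 'I_n) (x : 'I_(dim n)) : 'I_(dim t) :=
  enum_rank [ffun j : 'I_t => (enum_val x : {ffun 'I_n -> bool}) (tnth qs j)].

(* cylindrical extension  A (on H_qs)  |->  A (x) I (on H_V) *)
Definition cyl n t (qs : t.-tuple 'I_n) (A : 'M[C]_(dim t)) : 'M[C]_(dim n) :=
  \matrix_(x, y)
    if [forall k : 'I_n, (k \notin qs) ==>
          ((enum_val x : {ffun 'I_n -> bool}) k == (enum_val y : {ffun 'I_n -> bool}) k)]
    then A (loc qs x) (loc qs y) else 0.

Definition zero_idx t : 'I_(dim t) := enum_rank [ffun _ : 'I_t => false].

Inductive basic (n : nat) : Type :=
| BSkip
| BInit (t : nat) (qs : t.-tuple 'I_n)
| BUnit (t : nat) (qs : t.-tuple 'I_n) (U : 'M[C]_(dim t))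
| BAssert (t : nat) (qs : t.-tuple 'I_n) (P : 'M[C]_(dim t)).

Inductive prog (n : nat) : Type :=
| PBasic (e : basic n)
| PSeq (S0 S1 : prog n)
| PIf (t : nat) (qs : t.-tuple 'I_n) (P : 'M[C]_(dim t)) (S1 S0 : prog n)
| PWhile (t : nat) (qs : t.-tuple 'I_n) (P : 'M[C]_(dim t)) (S : prog n).

Definition wf_basic n (e : basic n) : Prop :=
  match e with
  | BSkip => True
  | BInit t qs => uniq qs
  | BUnit t qs U => uniq qs /\ unitary U
  | BAssert t qs P => uniq qs /\ projector P
  end.

Fixpoint wf_prog n (S : prog n) : Prop :=
  match S with
  | PBasic e => wf_basic e
  | PSeq S0 S1 => wf_prog S0 /\ wf_prog S1
  | PIf t qs P S1 S0 => uniq qs /\ projector P /\ wf_prog S1 /\ wf_prog S0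
  | PWhile t qs P Sb => uniq qs /\ projector P /\ wf_prog Sb
  end.

Definition pcompl d (P : 'M[C]_d) : 'M[C]_d := 1%:M - P.

Definition mlim d (f : nat -> 'M[C]_d) : 'M[C]_d :=
  \matrix_(i, j) (limn (fun k => complex.Re (f k i j)) +i* limn (fun k => complex.Im (f k i j)))%C.

Definition mcvg d (f : nat -> 'M[C]_d) (M : 'M[C]_d) : Prop :=
  forall i j, (fun k => complex.Re (f k i j)) @ \oo --> complex.Re (M i j) /\
              (fun k => complex.Im (f k i j)) @ \oo --> complex.Im (M i j).

Definition assert_sem n t (qs : t.-tuple 'I_n) (P : 'M[C]_(dim t)) (rho : 'M[C]_(dim n)) :=
  cyl qs P *m rho *m cyl qs P.

Definition basic_sem n (e : basic n) (rho : 'M[C]_(dim n)) : 'M[C]_(dim n) :=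
  match e with
  | BSkip => rho
  | BInit t qs =>
      \sum_(i < dim t)
        (cyl qs (delta_mx (zero_idx t) i) *m rho *m adj (cyl qs (delta_mx (zero_idx t) i)))
  | BUnit t qs U => cyl qs U *m rho *m adj (cyl qs U)
  | BAssert t qs P => assert_sem qs P rho
  end.

Fixpoint sem n (S : prog n) (rho : 'M[C]_(dim n)) : 'M[C]_(dim n) :=
  match S with
  | PBasic e => basic_sem e rho
  | PSeq S0 S1 => sem S1 (sem S0 rho)
  | PIf t qs P S1 S0 =>
      sem S1 (assert_sem qs P rho) + sem S0 (assert_sem qs (pcompl P) rho)
  | PWhile t qs P Sb =>
      mlim (fun k => \sum_(i < k)
              assert_sem qs (pcompl P) (iter i (fun r => sem Sb (assert_sem qs P r)) rho))
  end.

Definition PDO n := {rho : 'M[C]_(dim n) | pdo rho}.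

Definition csem n (S : prog n) (X : set (PDO n)) : set (PDO n) :=
  [set r | exists2 s, X s & sem S (proj1_sig s) = proj1_sig r].

End QuantumDefs.

Notation dim n := #|{ffun 'I_n -> bool}|.

Record CLattice := {
  car :> Type;
  cle : car -> car -> Prop;
  cle_refl : forall a, cle a a;
  cle_trans : forall a b c, cle a b -> cle b c -> cle a c;
  cle_anti : forall a b, cle a b -> cle b a -> a = b;
  csup : set car -> car;
  csup_ub : forall (X : set car) a, X a -> cle a (csup X);
  csup_least : forall (X : set car) b, (forall a, X a -> cle a b) -> cle (csup X) b
}.

Definition join2 (L : CLattice) (a b : L) : L := csup [set x | x = a \/ x = b].

Section Abstract.
Variables (R : realType) (n : nat) (L : CLattice).
Local Notation Q := (set (@PDO R n)).

Definition galois_embedding (alpha : Q -> L) (gamma : L -> Q) : Prop :=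
  (forall X Y, X `<=` Y -> cle (alpha X) (alpha Y)) /\
  (forall a b, cle a b -> gamma a `<=` gamma b) /\
  (forall X a, X `<=` gamma a <-> cle (alpha X) a) /\
  (forall a, alpha (gamma a) = a).

Definition well_structured (alpha : Q -> L) (gamma : L -> Q) : Prop :=
  galois_embedding alpha gamma /\
  (forall (I : finType) (rs : I -> PDO R n) (x : I -> R) (r : PDO R n),
      (forall i, 0 < x i) ->
      \sum_(i : I) (x i)%:C%C *: proj1_sig (rs i) = proj1_sig r ->
      alpha [set r] = csup [set alpha [set rs i] | i in setT]) /\
  (forall (rs : nat -> PDO R n) (x : nat -> R) (r : PDO R n),
      (forall i, 0 < x i) ->
      mcvg (fun k => \sum_(i < k) (x i)%:C%C *: proj1_sig (rs i)) (proj1_sig r) ->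
      alpha [set r] = csup [set alpha [set rs i] | i in setT]).

Definition sound_abs (alpha : Q -> L) (f : Q -> Q) (fs : L -> L) : Prop :=
  forall X, cle (alpha (f X)) (fs (alpha X)).

Definition complete_abs (alpha : Q -> L) (f : Q -> Q) (fs : L -> L) : Prop :=
  forall X, alpha (f X) = fs (alpha X).

Definition hvalid (gamma : L -> Q) (a : L) (S : prog R n) (b : L) : Prop :=
  csem S (gamma a) `<=` gamma b.

Definition assertP t (qs : t.-tuple 'I_n) (P : 'M[R[i]]_(dim t)) : prog R n :=
  PBasic (BAssert qs P).

Inductive hderiv (abs : basic R n -> L -> L) : L -> prog R n -> L -> Prop :=
| DExp e a : hderiv abs a (PBasic e) (abs e a)
| DSeq a a' b S0 S1 :
    hderiv abs a S0 a' -> hderiv abs a' S1 b -> hderiv abs a (PSeq S0 S1) b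
| DImp a a' b' b S :
    cle a a' -> hderiv abs a' S b' -> cle b' b -> hderiv abs a S b
| DMeas a t (qs : t.-tuple 'I_n) P S1 S0 b1 b0 :
    hderiv abs a (PSeq (assertP qs P) S1) b1 ->
    hderiv abs a (PSeq (assertP qs (pcompl P)) S0) b0 ->
    hderiv abs a (PIf qs P S1 S0) (join2 b0 b1)
| DWhile a b t (qs : t.-tuple 'I_n) P S :
    hderiv abs a (PSeq (assertP qs P) S) a ->
    hderiv abs a (assertP qs (pcompl P)) b ->
    hderiv abs a (PWhile qs P S) b.

End Abstract.

(* Main.v *)
Require Import Defs.
From HB Require Import structures.
From mathcomp Require Import all_boot all_order all_algebra.
From mathcomp Require Import all_classical all_reals all_analysis.
From mathcomp.real_closed Require Import complex.
Set Implicit Arguments.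
Unset Strict Implicit.
Unset Printing Implicit Defensive.
Import Order.TTheory GRing.Theory Num.Theory.
Import numFieldNormedType.Exports.
Local Open Scope classical_set_scope.
Local Open Scope ring_scope.
Local Notation dim n := #|{ffun 'I_n -> bool}|.
From mathcomp Require Import ring lra.
Local Notation Rec := complex.Re.
Local Notation Imc := complex.Im.
Section Mx.
Variable R : realType.
Local Notation C := (R[i]).

Lemma hadjK d1 d2 (A : 'M[C]_(d1,d2)) : adj (adj A) = A.
Proof. by apply/matrixP=> i j; rewrite !mxE conjcK. Qed.

Lemma hadjM d1 d2 d3 (A : 'M[C]_(d1,d2)) (B : 'M[C]_(d2,d3)) :
  adj (A *m B) = adj B *m adj A.
Proof.
apply/matrixP=> i j; rewrite !mxE rmorph_sum; apply: eq_bigr=> k _.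
by rewrite !mxE rmorphM mulrC.
Qed.

Lemma hadjD d1 d2 (A B : 'M[C]_(d1,d2)) : adj (A + B) = adj A + adj B.
Proof. by apply/matrixP=> i j; rewrite !mxE rmorphD. Qed.

Lemma hadjN d1 d2 (A : 'M[C]_(d1,d2)) : adj (- A) = - adj A.
Proof. by apply/matrixP=> i j; rewrite !mxE rmorphN. Qed.

Lemma hadjB d1 d2 (A B : 'M[C]_(d1,d2)) : adj (A - B) = adj A - adj B.
Proof. by rewrite hadjD hadjN. Qed.

Lemma hadjZ d1 d2 (c : C) (A : 'M[C]_(d1,d2)) : adj (c *: A) = c^*%C *: adj A.
Proof. by apply/matrixP=> i j; rewrite !mxE rmorphM. Qed.

Lemma hadj1 d : adj (1%:M : 'M[C]_d) = 1%:M.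
Proof. by apply/matrixP=> i j; rewrite !mxE conjc_nat eq_sym. Qed.

Lemma hadj_delta d1 d2 (i : 'I_d1) (j : 'I_d2) : adj (delta_mx i j : 'M[C]_(d1,d2)) = delta_mx j i.
Proof.
apply/matrixP=> a b; by rewrite !mxE conjc_nat andbC.
Qed.

Definition qform d (M : 'M[C]_d) (u w : 'cV[C]_d) : C := (adj u *m M *m w) 0 0.

Definition psd d (M : 'M[C]_d) := forall v : 'cV[C]_d, 0 <= qform M v v.

Lemma form_delta d (M : 'M[C]_d) i j : qform M (delta_mx i 0) (delta_mx j 0) = M i j.
Proof.
by rewrite /qform hadj_delta -rowE -colE !mxE.
Qed.

Lemma qformD1 d (M : 'M[C]_d) u1 u2 w : qform M (u1 + u2) w = qform M u1 w + qform M u2 w.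
Proof. by rewrite /qform hadjD !mulmxDl mxE. Qed.
Lemma formD2 d (M : 'M[C]_d) u w1 w2 : qform M u (w1 + w2) = qform M u w1 + qform M u w2.
Proof. by rewrite /qform mulmxDr mxE. Qed.
Lemma formZ1 d (M : 'M[C]_d) c u w : qform M (c *: u) w = c^*%C * qform M u w.
Proof. by rewrite /qform hadjZ -!scalemxAl mxE. Qed.
Lemma formZ2 d (M : 'M[C]_d) c u w : qform M u (c *: w) = c * qform M u w.
Proof. by rewrite /qform -!scalemxAr mxE. Qed.
Lemma formDM d (M N : 'M[C]_d) u w : qform (M + N) u w = qform M u w + qform N u w.
Proof. by rewrite /qform mulmxDr mulmxDl mxE. Qed.
Lemma formBM d (M N : 'M[C]_d) u w : qform (M - N) u w = qform M u w - qform N u w.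
Proof. by rewrite /qform mulmxBr mulmxBl !mxE. Qed.
Lemma form0M d u w : qform (0 : 'M[C]_d) u w = 0.
Proof. by rewrite /qform mulmx0 mul0mx mxE. Qed.
Lemma form_sumM d I (r : seq I) (P : pred I) (F : I -> 'M[C]_d) u w :
  qform (\sum_(i <- r | P i) F i) u w = \sum_(i <- r | P i) qform (F i) u w.
Proof.
elim/big_rec2: _ => [|i x y _ H]; first by rewrite form0M.
by rewrite formDM H.
Qed.

Lemma psd0 d : psd (0 : 'M[C]_d).
Proof. by move=> v; rewrite form0M. Qed.
Lemma psdD d (M N : 'M[C]_d) : psd M -> psd N -> psd (M + N).
Proof. by move=> HM HN v; rewrite formDM addr_ge0. Qed.
Lemma psd_sum d I (r : seq I) (P : pred I) (F : I -> 'M[C]_d) :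
  (forall i, P i -> psd (F i)) -> psd (\sum_(i <- r | P i) F i).
Proof.
move=> H; elim/big_rec: _ => [|i x Pi Hx]; first exact: psd0.
exact: psdD (H _ Pi) Hx.
Qed.

Lemma psd_conj d1 d2 (K : 'M[C]_(d1,d2)) (M : 'M[C]_d2) : psd M -> psd (K *m M *m adj K).
Proof.
move=> HM v; have := HM (adj K *m v).
by rewrite /qform hadjM hadjK !mulmxA.
Qed.

Lemma psd_diag d (M : 'M[C]_d) i : psd M -> 0 <= M i i.
Proof. by move=> H; rewrite -form_delta. Qed.

Lemma mxtrace_sum_diag d (M : 'M[C]_d) : \tr M = \sum_i M i i.
Proof. by []. Qed.

Lemma psd_tr d (M : 'M[C]_d) : psd M -> 0 <= \tr M.
Proof. by move=> H; apply: sumr_ge0 => i _; exact: psd_diag. Qed.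

End Mx.
Section Cyl.
Variable R : realType.
Local Notation C := (R[i]).
Variables (n t : nat) (qs : t.-tuple 'I_n).

Definition ev (x : 'I_(dim n)) : {ffun 'I_n -> bool} := enum_val x.
Definition agree (x y : 'I_(dim n)) : bool :=
  [forall k : 'I_n, (k \notin qs) ==> (ev x k == ev y k)].

Lemma cylE (A : 'M[C]_(dim t)) x y :
  cyl qs A x y = if agree x y then A (loc qs x) (loc qs y) else 0.
Proof. by rewrite mxE. Qed.

Lemma agreeP x y : reflect (forall k, k \notin qs -> ev x k = ev y k) (agree x y).
Proof.
apply: (iffP forallP) => H k.
  by move=> kq; have /implyP/(_ kq)/eqP := H k.
by apply/implyP=> kq; rewrite H.
Qed.

Lemma agree_refl x : agree x x.
Proof. by apply/agreeP. Qed.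
Lemma agree_sym x y : agree x y = agree y x.
Proof. by apply/agreeP/agreeP=> H k kq; rewrite H. Qed.
Lemma agree_trans x y z : agree x y -> agree y z -> agree x z.
Proof. by move=> /agreeP H1 /agreeP H2; apply/agreeP=> k kq; rewrite H1 ?H2. Qed.

Lemma loc_ev x : (enum_val (loc qs x) : {ffun 'I_t -> bool}) = [ffun j => ev x (tnth qs j)].
Proof. by rewrite /loc enum_rankK. Qed.

Lemma agree_loc_inj x y : agree x y -> loc qs x = loc qs y -> x = y.
Proof.
move=> /agreeP Hag Hl; apply: enum_val_inj; apply/ffunP=> k.
case: (boolP (k \in qs)) => [/tnthP [j ->]|kq]; last exact: Hag.
have := congr1 (fun z => (enum_val z : {ffun 'I_t -> bool}) j) Hl.
by rewrite /= !loc_ev !ffunE.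
Qed.

Lemma cyl1 : cyl qs (1%:M : 'M[C]_(dim t)) = 1%:M.
Proof.
apply/matrixP=> x y; rewrite cylE !mxE.
case: (eqVneq x y) => [->|nxy]; first by rewrite agree_refl eqxx.
case Hag: (agree x y) => //.
case: (eqVneq (loc qs x) (loc qs y)) => [Hl|] //.
by rewrite (agree_loc_inj Hag Hl) eqxx in nxy.
Qed.

Lemma cylD (A B : 'M[C]_(dim t)) : cyl qs (A + B) = cyl qs A + cyl qs B.
Proof. by apply/matrixP=> x y; rewrite !mxE; case: ifP; rewrite ?addr0 // !mxE. Qed.
Lemma cylN (A : 'M[C]_(dim t)) : cyl qs (- A) = - cyl qs A.
Proof. by apply/matrixP=> x y; rewrite !mxE; case: ifP; rewrite ?oppr0 // !mxE. Qed.
Lemma cylB (A B : 'M[C]_(dim t)) : cyl qs (A - B) = cyl qs A - cyl qs B.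
Proof. by rewrite cylD cylN. Qed.
Lemma cyl0 : cyl qs (0 : 'M[C]_(dim t)) = 0.
Proof. by apply/matrixP=> x y; rewrite !mxE; case: ifP. Qed.
Lemma cyl_sum I (r : seq I) (P : pred I) (F : I -> 'M[C]_(dim t)) :
  cyl qs (\sum_(i <- r | P i) F i) = \sum_(i <- r | P i) cyl qs (F i).
Proof.
elim/big_rec2: _ => [|i x y _ H]; first exact: cyl0.
by rewrite cylD H.
Qed.
Lemma cyl_adj (A : 'M[C]_(dim t)) : adj (cyl qs A) = cyl qs (adj A).
Proof.
apply/matrixP=> x y.
have -> : (adj (cyl qs A)) x y = (cyl qs A y x)^*%C by rewrite /adj mxE mxE.
rewrite !cylE agree_sym; case: ifP => _; rewrite ?conjc0 //.
by rewrite /adj mxE mxE.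
Qed.

Hypothesis Uq : uniq qs.

Definition gidx (x : 'I_(dim n)) (k : 'I_(dim t)) : 'I_(dim n) :=
  enum_rank [ffun i : 'I_n => if i \in qs then
     [exists j, (tnth qs j == i) && (enum_val k : {ffun 'I_t -> bool}) j] else ev x i].

Lemma ev_gidx x k : ev (gidx x k) = [ffun i : 'I_n => if i \in qs then
     [exists j, (tnth qs j == i) && (enum_val k : {ffun 'I_t -> bool}) j] else ev x i].
Proof. by rewrite /ev /gidx enum_rankK. Qed.

Lemma gidx_agree x k : agree x (gidx x k).
Proof. by apply/agreeP=> i iq; rewrite ev_gidx ffunE (negbTE iq). Qed.

Lemma exists_tnth (f : {ffun 'I_t -> bool}) j :
  [exists j', (tnth qs j' == tnth qs j) && f j'] = f j.
Proof.
apply/existsP/idP => [[j' /andP [/eqP Hj Hf]]|H].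
  by move/tuple_uniqP: Uq => /(_ _ _ Hj) <-.
by exists j; rewrite eqxx.
Qed.

Lemma gidx_loc x k : loc qs (gidx x k) = k.
Proof.
apply: enum_val_inj; rewrite loc_ev; apply/ffunP=> j.
by rewrite !ffunE ev_gidx ffunE mem_tnth exists_tnth.
Qed.

Lemma gidx_inv x z : agree x z -> gidx x (loc qs z) = z.
Proof.
move=> /agreeP Hag; apply: enum_val_inj; rewrite -[enum_val _]/(ev _) ev_gidx.
apply/ffunP=> k; rewrite ffunE.
case: (boolP (k \in qs)) => [/tnthP [j ->]|kq]; last exact: Hag.
by rewrite loc_ev exists_tnth ffunE.
Qed.

Lemma cylM (A B : 'M[C]_(dim t)) : cyl qs (A *m B) = cyl qs A *m cyl qs B.
Proof.
apply/matrixP=> x y; rewrite cylE !mxE.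
case Hxy: (agree x y).
  rewrite (bigID (fun z => agree x z)) /= [X in _ + X]big1 ?addr0; last first.
    by move=> z /negbTE Hz; rewrite !cylE Hz mul0r.
  rewrite (eq_bigr (fun z => A (loc qs x) (loc qs z) * B (loc qs z) (loc qs y))); last first.
    move=> z Hz; rewrite !cylE Hz.
    by rewrite (agree_trans (_ : agree z x) Hxy) // agree_sym.
  rewrite (reindex_onto (gidx x) (loc qs)) /=; last by move=> z; exact: gidx_inv.
  apply: eq_big => [k|k _]; first by rewrite gidx_agree gidx_loc eqxx.
  by rewrite gidx_loc.
rewrite big1 // => z _; rewrite !cylE.
case Hxz: (agree x z); last by rewrite mul0r.
case Hzy: (agree z y); last by rewrite mulr0.
by rewrite (agree_trans Hxz Hzy) in Hxy.
Qed.

End Cyl.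
Section MC.
Variable R : realType.
Local Notation C := (R[i]).

Lemma ReM (x y : C) : Rec (x * y) = Rec x * Rec y - Imc x * Imc y.
Proof. by case: x => a b; case: y => c d. Qed.
Lemma ImM (x y : C) : Imc (x * y) = Rec x * Imc y + Imc x * Rec y.
Proof. by case: x => a b; case: y => c d /=; rewrite addrC. Qed.
Lemma conj_i : ('i^*)%C = - 'i%C :> C.
Proof. by apply/eqP; rewrite eq_complex /= oppr0 !eqxx. Qed.

Lemma cvg_bigsum (I : finType) (f : I -> nat -> R) l :
  (forall i, f i n @[n --> \oo] --> l i) -> (\sum_(i : I) f i n) @[n --> \oo] --> \sum_i l i.
Proof.
move=> H.
have: forall s, (\sum_(i <- s) f i n) @[n --> \oo] --> \sum_(i <- s) l i.
  elim=> [|a s IH].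
    under eq_fun do rewrite big_nil. rewrite big_nil; exact: cvg_cst.
  under eq_fun do rewrite big_cons. rewrite big_cons. exact: cvgD.
exact.
Qed.

Lemma cvg_eqf (f g : nat -> R) (l : R) : (forall k, f k = g k) -> g n @[n --> \oo] --> l -> f n @[n --> \oo] --> l.
Proof. by move=> H; have -> : f = g by apply: funext. Qed.

Lemma lim_ge (u : nat -> R) l a : u @ \oo --> l -> (forall k, a <= u k) -> a <= l.
Proof. move=> H H0; rewrite -(cvg_lim _ H) //; apply: limr_ge; first exact: cvgP H. exact: nearW. Qed.
Lemma lim_le (u : nat -> R) l a : u @ \oo --> l -> (forall k, u k <= a) -> l <= a.
Proof. move=> H H0; rewrite -(cvg_lim _ H) //; apply: limr_le; first exact: cvgP H. exact: nearW. Qed.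

Definition vc d (i j : 'I_d) (c : C) : 'cV[C]_d := delta_mx i 0 + c *: delta_mx j 0.

Lemma form_vc d (M : 'M[C]_d) i j c :
  qform M (vc i j c) (vc i j c) = M i i + c * M i j + conjc c * M j i + conjc c * c * M j j.
Proof.
rewrite /vc qformD1 !formD2 !formZ1 !formZ2 !form_delta; ring.
Qed.

Lemma psd_real d (M : 'M[C]_d) v : psd M -> qform M v v = (Rec (qform M v v))%:C%C.
Proof. by move=> H; have := ger0_Im (H v); case: (qform M v v) => a b /= ->. Qed.

Lemma ge0_Re (z : C) : 0 <= z -> 0 <= Rec z.
Proof. by rewrite lecE => /andP []. Qed.

Lemma form_vc_bound d (M : 'M[C]_d) i j c : psd M -> conjc c * c = 1 ->
  Rec (qform M (vc i j c) (vc i j c)) <= 2 * (Rec (M i i) + Rec (M j j)).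
Proof.
move=> HM Hc.
have E : qform M (vc i j c) (vc i j c) + qform M (vc i j (-c)) (vc i j (-c)) =
   (M i i + M j j) *+ 2.
  by rewrite !form_vc rmorphN mulrNN Hc; ring.
have := congr1 (@complex.Re R) E; rewrite raddfD raddfMn raddfD /= -mulr_natl.
have := ge0_Re (HM (vc i j (-c))); lra.
Qed.

Lemma diag_le_tr d (M : 'M[C]_d) i : psd M -> Rec (M i i) <= Rec (\tr M).
Proof.
move=> HM; rewrite mxtrace_sum_diag raddf_sum (bigD1 i) //= lerDl.
by apply: sumr_ge0 => k _; apply: ge0_Re; apply: psd_diag.
Qed.

Lemma polar d (M : 'M[C]_d) i j :
  M i j *+ 4 = (qform M (vc i j 1) (vc i j 1) - qform M (vc i j (-1)) (vc i j (-1)))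
     - 'i%C * (qform M (vc i j 'i%C) (vc i j 'i%C) - qform M (vc i j (-'i%C)) (vc i j (-'i%C))).
Proof.
have c1 : conjc (1 : C) = 1 by exact: conjc1.
have cN1 : conjc (-1 : C) = -1 by simpc; rewrite /= oppr0.
have cNi : conjc (- 'i%C : C) = 'i%C by simpc; rewrite /= opprK.
rewrite !form_vc c1 cN1 cNi conj_i.
have Hx : 'i%C * 'i%C = -1 :> C by rewrite -expr2 sqr_i.
have E : forall z : C, z = z - ('i%C * 'i%C + 1) * ((M i j - M j i) *+ 2).
  by move=> z; rewrite Hx addNr mul0r subr0.
rewrite [LHS]E; ring.
Qed.

Lemma wsum_cvg d (S : nat -> 'M[C]_d) M (W : 'I_d -> 'I_d -> C) : mcvg S M ->
 (fun k => Rec (\sum_b \sum_a W a b * S k a b)) @ \oo --> Rec (\sum_b \sum_a W a b * M a b) /\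
 (fun k => Imc (\sum_b \sum_a W a b * S k a b)) @ \oo --> Imc (\sum_b \sum_a W a b * M a b).
Proof.
move=> H; split.
  have E : forall N : 'M[C]_d, Rec (\sum_b \sum_a W a b * N a b) =
     \sum_b \sum_a (Rec (W a b) * Rec (N a b) - Imc (W a b) * Imc (N a b)).
    move=> N; rewrite raddf_sum; apply: eq_bigr => b _; rewrite raddf_sum.
    by apply: eq_bigr => a _; exact: ReM.
  rewrite E; apply: (cvg_eqf (fun k => E (S k))).
  apply: (cvg_bigsum (f := fun b n => \sum_a (Rec (W a b) * Rec (S n a b) - Imc (W a b) * Imc (S n a b)))) => b.
  apply: (cvg_bigsum (f := fun a n => Rec (W a b) * Rec (S n a b) - Imc (W a b) * Imc (S n a b))) => a.
  apply: (cvgB (f := fun n => Rec (W a b) * Rec (S n a b)) (g := fun n => Imc (W a b) * Imc (S n a b))).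
    apply: cvgMr; exact: (H a b).1.
  apply: cvgMr; exact: (H a b).2.
have E : forall N : 'M[C]_d, Imc (\sum_b \sum_a W a b * N a b) =
   \sum_b \sum_a (Rec (W a b) * Imc (N a b) + Imc (W a b) * Rec (N a b)).
  move=> N; rewrite raddf_sum; apply: eq_bigr => b _; rewrite raddf_sum.
  by apply: eq_bigr => a _; exact: ImM.
rewrite E; apply: (cvg_eqf (fun k => E (S k))).
apply: (cvg_bigsum (f := fun b n => \sum_a (Rec (W a b) * Imc (S n a b) + Imc (W a b) * Rec (S n a b)))) => b.
apply: (cvg_bigsum (f := fun a n => Rec (W a b) * Imc (S n a b) + Imc (W a b) * Rec (S n a b))) => a.
apply: (cvgD (f := fun n => Rec (W a b) * Imc (S n a b)) (g := fun n => Imc (W a b) * Rec (S n a b))).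
  apply: cvgMr; exact: (H a b).2.
apply: cvgMr; exact: (H a b).1.
Qed.

Lemma form_expand d (N : 'M[C]_d) u w :
  qform N u w = \sum_b \sum_a (adj u 0 a * w b 0) * N a b.
Proof.
rewrite /qform mxE; apply: eq_bigr => b _; rewrite mxE mulr_suml.
by apply: eq_bigr => a _; ring.
Qed.

Lemma tr_expand d (N : 'M[C]_d) : \tr N = \sum_b \sum_a (a == b)%:R * N a b.
Proof.
rewrite mxtrace_sum_diag; apply: eq_bigr => b _.
rewrite (bigD1 b) //= big1 ?eqxx ?mul1r ?addr0 // => a /negbTE ->.
by rewrite mul0r.
Qed.

Lemma form_cvg d (S : nat -> 'M[C]_d) M u w : mcvg S M ->
 (fun k => Rec (qform (S k) u w)) @ \oo --> Rec (qform M u w) /\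
 (fun k => Imc (qform (S k) u w)) @ \oo --> Imc (qform M u w).
Proof.
move=> H; rewrite !form_expand; split.
  apply: (cvg_eqf (fun k => congr1 (@complex.Re R) (form_expand (S k) u w))).
  exact: (wsum_cvg _ H).1.
apply: (cvg_eqf (fun k => congr1 (@complex.Im R) (form_expand (S k) u w))).
exact: (wsum_cvg _ H).2.
Qed.

Lemma tr_cvg d (S : nat -> 'M[C]_d) M : mcvg S M ->
 (fun k => Rec (\tr (S k))) @ \oo --> Rec (\tr M) /\
 (fun k => Imc (\tr (S k))) @ \oo --> Imc (\tr M).
Proof.
move=> H; rewrite !tr_expand; split.
  apply: (cvg_eqf (fun k => congr1 (@complex.Re R) (tr_expand (S k)))).
  exact: (wsum_cvg _ H).1.
apply: (cvg_eqf (fun k => congr1 (@complex.Im R) (tr_expand (S k)))).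
exact: (wsum_cvg _ H).2.
Qed.

End MC.
Section MC2. Variable R : realType.
Local Notation C := (R[i]).
Lemma ReiM (z : C) : Rec ('i%C * z) = - Imc z.
Proof. by case: z => a b /=; rewrite !mul0r !mul1r sub0r. Qed.
Lemma ImiM (z : C) : Imc ('i%C * z) = Rec z.
Proof. by case: z => a b /=; rewrite !mul0r !mul1r add0r. Qed.
Lemma comb (x A B D E : C) : x *+ 4 = (A - B) - 'i%C * (D - E) ->
  Rec x = 4^-1 * (Rec A - Rec B + (Imc D - Imc E)) /\ Imc x = 4^-1 * (Imc A - Imc B - (Rec D - Rec E)).
Proof.
move=> H; have Hr := congr1 (@complex.Re R) H; have Hi := congr1 (@complex.Im R) H.
move: Hr Hi; rewrite !raddfMn /= !raddfB /= ReiM ImiM !raddfB /= => Hr Hi.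
have E4 (y : R) : y = 4^-1 * (y *+ 4).
  by rewrite -[y *+ 4]mulr_natl mulrA mulVf ?mul1r // pnatr_eq0.
by split; [rewrite (E4 (Rec x)) Hr | rewrite (E4 (Imc x)) Hi]; congr (_ * _); ring.
Qed.
End MC2.
Section MC3.
Variable R : realType.
Local Notation C := (R[i]).

Lemma mono_conv d (f : nat -> 'M[C]_d) (b : C) :
  (forall i, psd (f i)) -> (forall k, \tr (\sum_(i < k) f i) <= b) ->
  mcvg (fun k => \sum_(i < k) f i) (mlim (fun k => \sum_(i < k) f i)) /\
  psd (mlim (fun k => \sum_(i < k) f i)) /\ \tr (mlim (fun k => \sum_(i < k) f i)) <= b.
Proof.
move=> Hf Hb.
set S := fun k => \sum_(i < k) f i.
have HS k : psd (S k) by apply: psd_sum => i _; exact: Hf.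
have HbR k : Rec (\tr (S k)) <= Rec b by move: (Hb k); rewrite lecE => /andP [].
have HbI k : Imc (\tr (S k)) = Imc b by move: (Hb k); rewrite lecE => /andP [/eqP].
have Hq i j c : conjc c * c = 1 ->
    (fun k => Rec (qform (S k) (vc i j c) (vc i j c))) @ \oo -->
    sup (range (fun k => Rec (qform (S k) (vc i j c) (vc i j c)))).
  move=> Hc; apply: nondecreasing_cvgn.
    apply/nondecreasing_seqP => k /=.
    rewrite /S big_ord_recr /= formDM raddfD /= lerDl.
    exact: ge0_Re (Hf k _).
  exists (4 * Rec b) => _ [k _ <-].
  have := form_vc_bound i j (HS k) Hc; have := diag_le_tr i (HS k).
  have := diag_le_tr j (HS k); have := HbR k; lra.
have c1 : conjc (1 : C) * 1 = 1 by rewrite conjc1 mulr1.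
have cN1 : conjc (-1 : C) * -1 = 1.
  by rewrite (_ : conjc (-1 : C) = -1) ?mulrNN ?mulr1 //; simpc; rewrite /= oppr0.
have ci : conjc ('i%C : C) * 'i%C = 1.
  by rewrite conj_i mulNr -expr2 sqr_i opprK.
have cNi : conjc (- 'i%C : C) * - 'i%C = 1.
  rewrite (_ : conjc (- 'i%C : C) = 'i%C); last by simpc; rewrite /= opprK.
  by rewrite mulrN -expr2 sqr_i opprK.
have Hent i j : cvgn (fun k => Rec (S k i j)) /\ cvgn (fun k => Imc (S k i j)).
  set F := fun c k => Rec (qform (S k) (vc i j c) (vc i j c)).
  have key k := comb (polar (S k) i j).
  have Im0 c k : Imc (qform (S k) (vc i j c) (vc i j c)) = 0 by apply: ger0_Im; exact: HS.
  have kr k : Rec (S k i j) = 4^-1 * (F 1 k - F (-1) k).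
    by rewrite (key k).1 !Im0 subr0 addr0.
  have ki k : Imc (S k i j) = 4^-1 * (- (F 'i%C k - F (- 'i%C) k)).
    by rewrite (key k).2 !Im0 subr0 add0r.
  split.
    apply: cvgP; apply: (cvg_eqf kr).
    apply: cvgMr.
    apply: (cvgB (f := F 1) (g := F (-1))); [exact: Hq | exact: Hq].
  apply: cvgP; apply: (cvg_eqf ki).
  apply: cvgMr; apply: cvgN.
  apply: (cvgB (f := F 'i%C) (g := F (- 'i%C))); [exact: Hq | exact: Hq].
have Hmc : mcvg S (mlim S).
  move=> i j; rewrite /mlim !mxE /=; exact: Hent.
split; first exact: Hmc.
split.
  move=> v; have [HR HI] := form_cvg v v Hmc.
  rewrite lecE; apply/andP; split.
    apply/eqP; rewrite [Imc 0]/=; apply/le_anti/andP; split.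
      by apply: (lim_le HI) => k; have := ger0_Im (HS k v) => ->.
    by apply: (lim_ge HI) => k; have := ger0_Im (HS k v) => ->.
  have -> : Rec (0 : C) = 0 by [].
  by apply: (lim_ge HR) => k; apply: ge0_Re; apply: HS.
have [HR HI] := tr_cvg Hmc.
rewrite lecE; apply/andP; split.
  apply/eqP; apply/le_anti/andP; split.
    by apply: (lim_ge HI) => k; rewrite HbI lexx.
  by apply: (lim_le HI) => k; rewrite HbI lexx.
by apply: (lim_le HR).
Qed.

End MC3.
Section Sem.
Variable R : realType.
Local Notation C := (R[i]).

Lemma projector_compl d (P : 'M[C]_d) : projector P -> projector (pcompl P).
Proof.
case=> H1 H2; split; rewrite /pcompl; first by rewrite hadjB hadj1 H1.
by rewrite mulmxBl mul1mx mulmxBr mulmx1 H2 subrr subr0.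
Qed.

Variables (n t : nat) (qs : t.-tuple 'I_n).
Hypothesis Uq : uniq qs.

Lemma cyl_herm (P : 'M[C]_(dim t)) : projector P -> adj (cyl qs P) = cyl qs P.
Proof. by case=> H1 _; rewrite cyl_adj H1. Qed.

Lemma cyl_idem (P : 'M[C]_(dim t)) : projector P -> cyl qs P *m cyl qs P = cyl qs P.
Proof. by case=> _ H2; rewrite -cylM // H2. Qed.

Lemma tr_assert (P : 'M[C]_(dim t)) rho : projector P ->
  \tr (assert_sem qs P rho) = \tr (cyl qs P *m rho).
Proof.
move=> HP; rewrite /assert_sem mxtrace_mulC mulmxA cyl_idem //.
Qed.

Lemma tr_assert_split (P : 'M[C]_(dim t)) rho : projector P ->
  \tr (assert_sem qs P rho) + \tr (assert_sem qs (pcompl P) rho) = \tr rho.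
Proof.
move=> HP; rewrite tr_assert // tr_assert; last exact: projector_compl.
rewrite /pcompl cylB cyl1 mulmxBl mul1mx raddfB /=.
by rewrite addrC subrK.
Qed.

Lemma psd_assert (P : 'M[C]_(dim t)) rho : projector P -> psd rho -> psd (assert_sem qs P rho).
Proof.
move=> HP Hr; rewrite /assert_sem -[X in _ *m X](cyl_herm HP).
exact: psd_conj.
Qed.

Lemma tr_assert_le (P : 'M[C]_(dim t)) rho : projector P -> psd rho ->
  \tr (assert_sem qs P rho) <= \tr rho.
Proof.
move=> HP Hr; rewrite -[X in _ <= X](tr_assert_split rho HP) lerDl.
by apply: psd_tr; apply: psd_assert => //; exact: projector_compl.
Qed.

Lemma unit_tr (U : 'M[C]_(dim t)) (rho : 'M[C]_(dim n)) : unitary U ->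
  \tr (cyl qs U *m rho *m adj (cyl qs U)) = \tr rho.
Proof.
move=> HU; rewrite mxtrace_mulC mulmxA cyl_adj -cylM // HU cyl1 mul1mx //.
Qed.

Lemma init_tr (rho : 'M[C]_(dim n)) :
  \tr (\sum_(i < dim t) (cyl qs (delta_mx (zero_idx t) i) *m rho *m
        adj (cyl qs (delta_mx (zero_idx t) i)))) = \tr rho.
Proof.
rewrite raddf_sum /=.
rewrite (eq_bigr (fun i => \tr ((adj (cyl qs (delta_mx (zero_idx t) i)) *m
           cyl qs (delta_mx (zero_idx t) i)) *m rho))); last first.
  by move=> i _; rewrite mxtrace_mulC mulmxA.
rewrite -raddf_sum /= -mulmx_suml.
rewrite (eq_bigr (fun i => cyl qs (delta_mx i i))); last first.
  by move=> i _; rewrite cyl_adj hadj_delta -cylM // mul_delta_mx.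
by rewrite -cyl_sum -mx1_sum_delta cyl1 mul1mx.
Qed.

Lemma while_ok (P : 'M[C]_(dim t)) (Sb : prog R n) : projector P ->
  (forall rho, psd rho -> psd (sem Sb rho) /\ \tr (sem Sb rho) <= \tr rho) ->
  forall rho, psd rho ->
  mcvg (fun k => \sum_(i < k) assert_sem qs (pcompl P)
          (iter i (fun r => sem Sb (assert_sem qs P r)) rho))
       (sem (PWhile qs P Sb) rho) /\
  psd (sem (PWhile qs P Sb) rho) /\ \tr (sem (PWhile qs P Sb) rho) <= \tr rho.
Proof.
move=> HP IHb rho Hr /=.
set T := fun r => sem Sb (assert_sem qs P r).
have HT r : psd r -> psd (T r) /\
    \tr (T r) + \tr (assert_sem qs (pcompl P) r) <= \tr r.
  move=> Hr'; have [A B] := IHb _ (psd_assert HP Hr'); split => //.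
  by rewrite -[X in _ <= X](tr_assert_split r HP) lerD2r.
have Hx i : psd (iter i T rho) by elim: i => //= i IH; exact: (HT _ IH).1.
have Hsum k : \tr (\sum_(i < k) assert_sem qs (pcompl P) (iter i T rho))
     + \tr (iter k T rho) <= \tr rho.
  elim: k => [|k IH]; first by rewrite big_ord0 raddf0 add0r lexx.
  rewrite big_ord_recr /= raddfD /=; apply: le_trans IH.
  have := (HT _ (Hx k)).2; rewrite -addrA lerD2l addrC //.
have Hc : forall i, psd (assert_sem qs (pcompl P) (iter i T rho)).
  by move=> i; apply: psd_assert; [exact: projector_compl | exact: Hx].
have Hb : forall k, \tr (\sum_(i < k) assert_sem qs (pcompl P) (iter i T rho)) <= \tr rho.
  move=> k; apply: le_trans (Hsum k); rewrite lerDl; exact: psd_tr (Hx k).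
exact: (mono_conv Hc Hb).
Qed.

End Sem.

Section Sem2.
Variable R : realType.
Local Notation C := (R[i]).
Variable n : nat.

Lemma sem_ok (S : prog R n) : wf_prog S -> forall rho, psd rho ->
  psd (sem S rho) /\ \tr (sem S rho) <= \tr rho.
Proof.
elim: S => [e|S0 IH0 S1 IH1|t qs P S1 IH1 S0 IH0|t qs P Sb IHb].
- case: e => [|t qs|t qs U|t qs P] /= Hwf rho Hrho.
  + by split; rewrite ?lexx.
  + split; first by apply: psd_sum => i _; exact: psd_conj.
    by rewrite init_tr // lexx.
  + case: Hwf => Hu HU; split; first exact: psd_conj.
    by rewrite unit_tr // lexx.
  + case: Hwf => Hu HP; split; [exact: psd_assert | exact: tr_assert_le].
- case=> H0 H1 rho Hr /=; have [A B] := IH0 H0 rho Hr.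
  have [A' B'] := IH1 H1 _ A; split => //; exact: le_trans B' B.
- case=> Hu [HP [H1 H0]] rho Hr /=.
  have HA1 := psd_assert qs HP Hr.
  have HA0 := psd_assert qs (projector_compl HP) Hr.
  have [A1 B1] := IH1 H1 _ HA1; have [A0 B0] := IH0 H0 _ HA0.
  split; first exact: psdD.
  rewrite raddfD /= -(tr_assert_split Hu rho HP); exact: lerD.
- case=> Hu [HP Hb] rho Hr.
  by have [_ H] := while_ok Hu HP (IHb Hb) Hr.
Qed.

Lemma sem_pdo (S : prog R n) : wf_prog S -> forall rho : PDO R n, pdo (sem S (proj1_sig rho)).
Proof.
move=> HS [rho [Hp Ht]] /=; have [A B] := sem_ok HS Hp.
split; [exact: A | exact: le_trans B Ht].
Qed.

Definition semP (S : prog R n) (HS : wf_prog S) (rho : PDO R n) : PDO R n :=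
  exist _ (sem S (proj1_sig rho)) (sem_pdo HS rho).

End Sem2.
Lemma pdo_eq (R : realType) (n : nat) (r s : PDO R n) : proj1_sig r = proj1_sig s -> r = s.
Proof.
case: r => r Hr; case: s => s Hs /= E; subst s.
by rewrite (Prop_irrelevance Hr Hs).
Qed.

Section Abs.
Variables (R : realType) (n : nat) (L : CLattice).
Variables (alpha : set (PDO R n) -> L) (gamma : L -> set (PDO R n)) (abs : basic R n -> L -> L).
Hypothesis WS : well_structured alpha gamma.
Local Notation C := (R[i]).

Lemma amono X Y : X `<=` Y -> cle (alpha X) (alpha Y).
Proof. by case: WS => [[H _] _]; exact: H. Qed.
Lemma gmono a b : cle a b -> gamma a `<=` gamma b.
Proof. by case: WS => [[_ [H _]] _]; exact: H. Qed.
Lemma GC X a : X `<=` gamma a <-> cle (alpha X) a.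
Proof. by case: WS => [[_ [_ [H _]]] _]; exact: H. Qed.
Lemma agK a : alpha (gamma a) = a.
Proof. by case: WS => [[_ [_ [_ H]]] _]; exact: H. Qed.

Lemma alpha_le X a : (forall r, X r -> cle (alpha [set r]) a) -> cle (alpha X) a.
Proof.
move=> H; apply/GC => r Xr; have /GC Hr := H r Xr; exact: Hr.
Qed.
Lemma alpha_single (X : set (PDO R n)) r : X r -> cle (alpha [set r]) (alpha X).
Proof. by move=> Xr; apply: amono => x ->. Qed.
Lemma in_gamma r a : cle (alpha [set r]) a -> gamma a r.
Proof. by move/GC; apply. Qed.

Lemma csem_in (S : prog R n) (HS : wf_prog S) X s : X s -> csem S X (semP HS s).
Proof. by move=> Xs; exists s. Qed.
Lemma csem_inv (S : prog R n) (HS : wf_prog S) X r : csem S X r -> exists2 s, X s & r = semP HS s.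
Proof. by case=> s Xs E; exists s => //; apply: pdo_eq. Qed.
Lemma csem_mono (S : prog R n) X Y : X `<=` Y -> csem S X `<=` csem S Y.
Proof. by move=> H r [s Xs E]; exists s => //; apply: H. Qed.

Lemma le_join2l (a b : L) : cle a (join2 a b).
Proof. by apply: csup_ub; left. Qed.
Lemma le_join2r (a b : L) : cle b (join2 a b).
Proof. by apply: csup_ub; right. Qed.
Lemma join2_least (a b c : L) : cle a c -> cle b c -> cle (join2 a b) c.
Proof. by move=> Ha Hb; apply: csup_least => x [->|->]. Qed.

Lemma scale1C d (M : 'M[C]_d) : ((1 : R)%:C)%C *: M = M.
Proof. by rewrite (_ : ((1 : R)%:C)%C = 1) ?scale1r. Qed.

Lemma if_decomp t (qs : t.-tuple 'I_n) P (S1 S0 : prog R n) (W : wf_prog (PIf qs P S1 S0))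
  (W1 : wf_prog (PSeq (assertP qs P) S1)) (W0 : wf_prog (PSeq (assertP qs (pcompl P)) S0)) s :
  alpha [set semP W s] = join2 (alpha [set semP W0 s]) (alpha [set semP W1 s]).
Proof.
case: WS => _ [Hfin _].
have -> : join2 (alpha [set semP W0 s]) (alpha [set semP W1 s]) =
   csup [set alpha [set (if i then semP W1 s else semP W0 s)] | i in [set: bool]].
  rewrite /join2; congr csup; apply/seteqP; split => x.
    by case=> ->; [exists false | exists true].
  by case=> [[]] _ <-; [right | left].
apply: (Hfin _ _ (fun=> 1)); first by move=> _; exact: ltr01.
by rewrite big_bool /= !scale1C addrC.
Qed.

Section While.
Variables (t : nat) (qs : t.-tuple 'I_n) (P : 'M[C]_(dim t)) (Sb : prog R n).
Hypotheses (Hu : uniq qs) (HP : projector P) (Wb : wf_prog Sb).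

Definition Bw : prog R n := PSeq (assertP qs P) Sb.
Definition Aw : prog R n := assertP qs (pcompl P).
Fixpoint Bk (k : nat) : prog R n := if k is k'.+1 then PSeq Bw (Bk k') else Aw.

Lemma WB : wf_prog Bw. Proof. by []. Qed.
Lemma WA : wf_prog Aw. Proof. by split => //; exact: projector_compl. Qed.
Lemma WBk k : wf_prog (Bk k).
Proof. elim: k => [|k IH] /=; [exact: WA | split => //]. Qed.
Lemma WW : wf_prog (PWhile qs P Sb). Proof. by []. Qed.

Definition Tf r := sem Sb (assert_sem qs P r).
Lemma sem_Bk k r : sem (Bk k) r = assert_sem qs (pcompl P) (iter k Tf r).
Proof. by elim: k r => [|k IH] r //=; rewrite IH -iterS iterSr. Qed.

Lemma while_decomp s :
  alpha [set semP WW s] = csup [set alpha [set semP (WBk i) s] | i in [set: nat]].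
Proof.
case: WS => _ [_ Hcnt].
apply: (Hcnt _ (fun=> 1)); first by move=> _; exact: ltr01.
have [Hc _] := while_ok Hu HP (fun rho Hr => sem_ok Wb Hr) (proj2_sig s).1.
have E : (fun k => \sum_(i < k) ((1 : R)%:C)%C *: sval (semP (WBk i) s)) =
    (fun k => \sum_(i < k) assert_sem qs (pcompl P) (iter i Tf (sval s))).
  by apply: funext => k; apply: eq_bigr => i _; rewrite scale1C /= sem_Bk.
by rewrite E.
Qed.

Lemma iter_semP k s : sval (iter k (semP WB) s) = iter k Tf (sval s).
Proof. by elim: k => //= k ->. Qed.

Lemma sem_Bk_P s k : semP (WBk k) s = semP WA (iter k (semP WB) s).
Proof. by apply: pdo_eq; rewrite /= sem_Bk iter_semP. Qed.

End While.

Lemma soundness :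
  (forall e, wf_basic e -> sound_abs alpha (csem (PBasic e)) (abs e)) ->
  forall (S : prog R n) a b, wf_prog S -> hderiv abs a S b -> hvalid gamma a S b.
Proof.
move=> Hs S a b HS H; move: H HS.
elim=> {a S b}.
- move=> e a He; apply/GC; rewrite -{2}(agK a); exact: Hs.
- move=> a a' b S0 S1 _ IH0 _ IH1 [W0 W1] r [s Hs0 E].
  apply: (IH1 W1); exists (semP W0 s) => //.
  by apply: (IH0 W0); exists s.
- move=> a a' b' b S Ha _ IH Hb W r Hr.
  apply: (gmono Hb); apply: (IH W).
  exact: (csem_mono (gmono Ha)).
- move=> a t qs P S1 S0 b1 b0 _ IH1 _ IH0 W r.
  case: (W) => Hu [HP [W1 W0]].
  have W1' : wf_prog (PSeq (assertP qs P) S1) by [].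
  have W0' : wf_prog (PSeq (assertP qs (pcompl P)) S0).
    by split => //; split => //; exact: projector_compl.
  move=> /(csem_inv W) [s Hs0 ->]; apply: in_gamma.
  rewrite (if_decomp W W1' W0'); apply: join2_least.
    apply: cle_trans (le_join2l _ _); apply/GC => c ->.
    by apply: (IH0 W0'); exact: csem_in.
  apply: cle_trans (le_join2r _ _); apply/GC => c ->.
  by apply: (IH1 W1'); exact: csem_in.
- move=> a b t qs P Sb _ IHT _ IHA W r.
  case: (W) => Hu [HP Wb].
  move=> /(csem_inv W) [s Hs0 ->]; apply: in_gamma.
  have -> : W = WW Hu HP Wb by exact: Prop_irrelevance.
  rewrite (while_decomp Hu HP Wb); apply: csup_least => _ [k _ <-].
  apply/GC => c ->; rewrite sem_Bk_P.
  apply: (IHA (WA Hu HP)); apply: csem_in.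
  elim: k => [|k IH] //=.
  by apply: (IHT (WB Hu HP Wb)); exact: csem_in.
Qed.

End Abs.
Section Compl.
Variables (R : realType) (n : nat) (L : CLattice).
Variables (alpha : set (PDO R n) -> L) (gamma : L -> set (PDO R n)) (abs : basic R n -> L -> L).
Hypothesis WS : well_structured alpha gamma.
Hypothesis Hcomp : forall e, wf_basic e -> complete_abs alpha (csem (PBasic e)) (abs e).
Local Notation C := (R[i]).

Definition SK (S : prog R n) := (forall a, hderiv abs a S (alpha (csem S (gamma a)))) /\
  (forall X Y, alpha X = alpha Y -> alpha (csem S X) = alpha (csem S Y)).

Lemma SK_basic e : wf_basic e -> SK (PBasic e).
Proof.
move=> He; split.
  by move=> a; rewrite Hcomp // (agK WS); exact: DExp.
by move=> X Y E; rewrite !Hcomp // E.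
Qed.

Lemma csem_seq (S0 S1 : prog R n) : wf_prog S0 -> forall X,
  csem (PSeq S0 S1) X = csem S1 (csem S0 X).
Proof.
move=> W0 X; apply/seteqP; split => r.
  by case=> s Xs E; exists (semP W0 s); [exact: csem_in | exact: E].
case=> s' [s Xs E0] E1; exists s => //=; by rewrite E0.
Qed.

Lemma SK_seq S0 S1 : wf_prog S0 -> SK S0 -> SK S1 -> SK (PSeq S0 S1).
Proof.
move=> W0 [H0 K0] [H1 K1]; split.
  move=> a; apply: (DSeq (H0 a)).
  have := H1 (alpha (csem S0 (gamma a))).
  by rewrite (K1 _ (csem S0 (gamma a))) ?(agK WS) // csem_seq.
by move=> X Y E; rewrite !csem_seq //; apply: K1; exact: K0.
Qed.

Lemma SK_all S : wf_prog S -> SK S.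
Proof.
elim: S => [e|S0 IH0 S1 IH1|t qs P S1 IH1 S0 IH0|t qs P Sb IHb].
- exact: SK_basic.
- by case=> W0 W1; apply: SK_seq => //; [exact: IH0 | exact: IH1].
- move=> W; case: (W) => Hu [HP [W1 W0]].
  have WA1 : wf_basic (BAssert qs P) by [].
  have WA0 : wf_basic (BAssert qs (pcompl P)) by split => //; exact: projector_compl.
  have W1' : wf_prog (PSeq (assertP qs P) S1) by [].
  have W0' : wf_prog (PSeq (assertP qs (pcompl P)) S0) by [].
  have [H1 K1] : SK (PSeq (assertP qs P) S1).
    by apply: SK_seq => //; [exact: SK_basic | exact: IH1].
  have [H0 K0] : SK (PSeq (assertP qs (pcompl P)) S0).
    by apply: SK_seq => //; [exact: SK_basic | exact: IH0].
  have Hid X : alpha (csem (PIf qs P S1 S0) X) =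
      join2 (alpha (csem (PSeq (assertP qs (pcompl P)) S0) X))
            (alpha (csem (PSeq (assertP qs P) S1) X)).
    apply: cle_anti.
      apply: (alpha_le WS) => r /(csem_inv W) [s Xs ->].
      rewrite (if_decomp WS W W1' W0'); apply: join2_least.
        apply: cle_trans (le_join2l _ _); have := alpha_single WS (csem_in W0' Xs); apply.
      apply: cle_trans (le_join2r _ _); have := alpha_single WS (csem_in W1' Xs); apply.
    apply: join2_least.
      apply: (alpha_le WS) => c /(csem_inv W0') [s Xs ->].
      apply: cle_trans (alpha_single WS (csem_in W Xs)).
      rewrite (if_decomp WS W W1' W0'); exact: le_join2l.
    apply: (alpha_le WS) => c /(csem_inv W1') [s Xs ->].
    apply: cle_trans (alpha_single WS (csem_in W Xs)).
    rewrite (if_decomp WS W W1' W0'); exact: le_join2r.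
  split.
    by move=> a; rewrite Hid; exact: DMeas (H1 a) (H0 a).
  by move=> X Y E; rewrite !Hid (K1 _ _ E) (K0 _ _ E).
- move=> W; case: (W) => Hu [HP Wb].
  have WA0 : wf_basic (BAssert qs (pcompl P)) by split => //; exact: projector_compl.
  have SKB : SK (Bw qs P Sb).
    by apply: SK_seq => //; [exact: SK_basic | exact: IHb].
  have SKA : SK (Aw qs P) by exact: SK_basic.
  have SKk k : SK (Bk qs P Sb k).
    elim: k => [|k IH] //=; apply: SK_seq => //.
  have Hid X : alpha (csem (PWhile qs P Sb) X) =
      csup [set alpha (csem (Bk qs P Sb k) X) | k in [set: nat]].
    apply: cle_anti.
      apply: (alpha_le WS) => r /(csem_inv W) [s Xs ->].
      have -> : W = WW Hu HP Wb by exact: Prop_irrelevance.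
      rewrite (while_decomp WS Hu HP Wb); apply: csup_least => _ [i _ <-].
      apply: cle_trans (alpha_single WS (csem_in (WBk Hu HP Wb i) Xs)) _.
      by apply: csup_ub; exists i.
    apply: csup_least => _ [k _ <-].
    apply: (alpha_le WS) => c /(csem_inv (WBk Hu HP Wb k)) [s Xs ->].
    apply: cle_trans (alpha_single WS (csem_in W Xs)).
    have -> : W = WW Hu HP Wb by exact: Prop_irrelevance.
    rewrite (while_decomp WS Hu HP Wb); apply: csup_ub; by exists k.
  split; last first.
    move=> X Y E; rewrite !Hid; congr csup; apply/seteqP; split => _ [k _ <-];
      exists k => //; by rewrite ((SKk k).2 _ _ E).
  move=> a.
  set Tp := semP (WB Hu HP Wb).
  set U := [set r | exists k, exists2 s, gamma a s & r = iter k Tp s].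
  have aI : cle a (alpha U).
    by rewrite -{1}(agK WS a); apply: (amono WS) => s Hs; exists 0%N, s.
  have UB : csem (Bw qs P Sb) U `<=` U.
    move=> r /(csem_inv (WB Hu HP Wb)) [u [k [s Hs ->]] ->].
    by exists k.+1, s.
  have HI : hderiv abs (alpha U) (Bw qs P Sb) (alpha U).
    case: SKB => HB KB.
    apply: (DImp (cle_refl (alpha U)) (HB (alpha U))).
    rewrite (KB _ U) ?(agK WS) //; exact: (amono WS) UB.
  have HA : hderiv abs (alpha U) (Aw qs P) (abs (BAssert qs (pcompl P)) (alpha U)).
    exact: DExp.
  apply: (DImp aI (DWhile HI HA)).
  rewrite -(Hcomp WA0 U).
  apply: (alpha_le WS) => c /(csem_inv (WA Hu HP)) [u [k [s Hs ->]] ->].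
  rewrite -sem_Bk_P.
  apply: cle_trans (alpha_single WS (csem_in W Hs)).
  have -> : W = WW Hu HP Wb by exact: Prop_irrelevance.
  rewrite (while_decomp WS Hu HP Wb); apply: csup_ub; by exists k.
Qed.

Lemma completeness (S : prog R n) a b : wf_prog S -> hvalid gamma a S b -> hderiv abs a S b.
Proof.
move=> W Hv; have [H _] := SK_all W.
apply: (DImp (cle_refl a) (H a)).
exact/(GC WS).
Qed.

End Compl.

Theorem mainTheorem9 (R : realType) (n : nat) (L : CLattice)
  (alpha : set (PDO R n) -> L) (gamma : L -> set (PDO R n))
  (abs : basic R n -> L -> L) :
  well_structured alpha gamma ->
  (forall e, wf_basic e -> forall a b, cle a b -> cle (abs e a) (abs e b)) ->
  ((forall e, wf_basic e -> sound_abs alpha (csem (PBasic e)) (abs e)) ->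
     forall (S : prog R n) (a b : L), wf_prog S -> hderiv abs a S b -> hvalid gamma a S b) /\
  ((forall e, wf_basic e -> complete_abs alpha (csem (PBasic e)) (abs e)) ->
     forall (S : prog R n) (a b : L), wf_prog S -> (hderiv abs a S b <-> hvalid gamma a S b)).
Proof.
move=> WS _; split; first exact: (soundness WS).
move=> Hc S a b W; split; last exact: (completeness WS Hc W).
apply: (soundness WS) => // e He X; rewrite (Hc e He X); exact: cle_refl.
Qed.
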